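(* Let $X$ be convex and let $f$ be $\alpha$-robustly quasiconvex for some $\alpha>0$, with $X\subset\operatorname{dom}f$. Then the set-valued map $\mathrm{Sol}(\cdot)$ is continuous (both upper and lower semicontinuous) at $0$ if and only if $\mathrm{Sol}(0)$ is a singleton and $X^\infty\cap\mathcal{K}_q(f)=\{0\}$.
   Context: Standing assumptions: $f:\mathbb{R}^n\to\mathbb{R}\cup\{\pm\infty\}$ is proper (never $-\infty$ and finite at some point) and lower semicontinuous; $X\subset\mathbb{R}^n$ is a nonempty closed set with $\operatorname{dom}f\cap X$ unbounded. $f$ is $\alpha$-robustly quasiconvex ($\alpha\ge0$) if $x\mapsto f(x)+\langle u,x\rangle$ is quasiconvex for every $u$ in the open ball $\mathbb{B}_\alpha$ of radius $\alpha$ about $0$ (quasiconvex: $g(\lambda x+(1-\lambda)y)\le\max\{g(x),g(y)\}$ for $x,y\in\operatorname{dom}g$, $\lambda\in[0,1]$). $X^\infty=\{u:\exists t_k\to+\infty,\ \exists x_k\in X,\ x_k/t_k\to u\}$. $f^\infty_q(u)=\sup_{x\in\operatorname{dom}f}\sup_{t>0}\frac{f(x+tu)-f(x)}{t}$, $\mathcal{K}_q(f)=\{d: f^\infty_q(d)\le0\}$. $f_u(x)=f(x)-\langle u,x\rangle$, $\mathrm{Sol}(u)=\{x\in X: f_u(x)\le f_u(y)\ \forall y\in X\}$. $F$ is upper semicontinuous at $\bar u$ if for every open $V\supset F(\bar u)$ there is a neighborhood $U$ of $\bar u$ with $F(u)\subset V$ for $u\in U$; lower semicontinuous at $\bar u$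 if $F(\bar u)\neq\emptyset$ and for every open $V$ meeting $F(\bar u)$ there is a neighborhood $U$ of $\bar u$ with $F(u)\cap V\ne\emptyset$ for $u\in U$. *)

(* Defs.v *)
(* Vectors of R^n are row vectors 'rV[R]_n,
   with the product topology of mathcomp-analysis (matrix_topology). *)
From HB Require Import structures.
From mathcomp Require Import all_boot all_order all_algebra.
From mathcomp Require Import all_classical all_reals all_analysis.
Set Implicit Arguments. Unset Strict Implicit. Unset Printing Implicit Defensive.
Import Order.TTheory GRing.Theory Num.Theory.
Import numFieldNormedType.Exports.
Local Open Scope classical_set_scope.
Local Open Scope ring_scope.

Section Defs.
Context {R : realType} {n : nat}.
Local Notation vec := 'rV[R]_n.

Definition dotv (u x : vec) : R := \sum_(i < n) u ord0 i * x ord0 i.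
Definition enorm (x : vec) : R := Num.sqrt (dotv x x).

Definition edom (f : vec -> \bar R) : set vec := [set x | (f x < +oo)%E].

Definition proper_fun (f : vec -> \bar R) : Prop :=
  (forall x, f x != -oo%E) /\ (exists x, f x \is a fin_num).

Definition bounded_setE (A : set vec) : Prop :=
  exists M : R, forall x, A x -> enorm x <= M.

Definition convexE (A : set vec) : Prop :=
  forall x y (l : R), A x -> A y -> 0 <= l <= 1 -> A (l *: x + (1 - l) *: y).

Definition quasiconvexE (g : vec -> \bar R) : Prop :=
  forall x y (l : R), edom g x -> edom g y -> 0 <= l <= 1 ->
    (g (l *: x + (1 - l) *: y)%R <= maxe (g x) (g y))%E.

Definition robustly_quasiconvex (alpha : R) (f : vec -> \bar R) : Prop :=
  forall u : vec, enorm u < alpha ->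
    quasiconvexE (fun x => (f x + (dotv u x)%:E)%E).

Definition asymptotic_cone (X : set vec) : set vec :=
  [set u | exists (t : nat -> R) (x : nat -> vec),
     t @ \oo --> +oo /\ (forall k, X (x k)) /\
     (fun k => (t k)^-1 *: x k) @ \oo --> u].

Definition fq_inf (f : vec -> \bar R) (u : vec) : \bar R :=
  ereal_sup [set r | exists (x : vec) (t : R), edom f x /\ 0 < t /\
              r = ((f (x + t *: u)%R - f x) * (t^-1)%:E)%E].

Definition Kq (f : vec -> \bar R) : set vec := [set d | (fq_inf f d <= 0)%E].

Definition f_shift (f : vec -> \bar R) (u : vec) (x : vec) : \bar R :=
  (f x - (dotv u x)%:E)%E.

Definition Sol (f : vec -> \bar R) (X : set vec) (u : vec) : set vec :=
  [set x | X x /\ forall y, X y -> (f_shift f u x <= f_shift f u y)%E].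

Definition usc_map (F : vec -> set vec) (ub : vec) : Prop :=
  forall V : set vec, open V -> F ub `<=` V ->
    exists2 U, nbhs ub U & forall u, U u -> F u `<=` V.

Definition lsc_map (F : vec -> set vec) (ub : vec) : Prop :=
  F ub !=set0 /\
  forall V : set vec, open V -> F ub `&` V !=set0 ->
    exists2 U, nbhs ub U & forall u, U u -> F u `&` V !=set0.

End Defs.

(* Main.v *)
Require Import Defs.
From HB Require Import structures.
From mathcomp Require Import all_boot all_order all_algebra.
From mathcomp Require Import all_classical all_reals all_analysis.
From mathcomp Require Import ring lra.
Import Order.TTheory GRing.Theory Num.Theory.
Import numFieldNormedType.Exports.
Local Open Scope classical_set_scope.
Local Open Scope ring_scope.

Section Basic.
Context {R : realType} {n : nat}.
Local Notation vec := 'rV[R]_n.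
Implicit Types (u x y d : vec).

Lemma coord_le_norm x i : `|x ord0 i| <= `|x|.
Proof.
have /mapP[j Hj ->] : `|x ord0 i| \in [seq `|x k.1 k.2| | k : 'I_1 * 'I_n].
  by apply/mapP; exists (ord0, i) => //=; rewrite mem_enum.
by rewrite [leRHS]/Num.norm /= mx_normrE; apply/bigmax_geP; right => /=; exists j.
Qed.

Lemma dotvDr u x y : dotv u (x + y) = dotv u x + dotv u y.
Proof. by rewrite /dotv -big_split /=; apply: eq_bigr => i _; rewrite mxE mulrDr. Qed.
Lemma dotvDl u x y : dotv (x + y) u = dotv x u + dotv y u.
Proof. by rewrite /dotv -big_split /=; apply: eq_bigr => i _; rewrite mxE mulrDl. Qed.
Lemma dotvZr (a : R) u x : dotv u (a *: x) = a * dotv u x.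
Proof. by rewrite /dotv mulr_sumr; apply: eq_bigr => i _; rewrite mxE mulrCA. Qed.
Lemma dotvZl (a : R) u x : dotv (a *: u) x = a * dotv u x.
Proof. by rewrite /dotv mulr_sumr; apply: eq_bigr => i _; rewrite mxE mulrA. Qed.
Lemma dotvNr u x : dotv u (- x) = - dotv u x.
Proof. by rewrite -scaleN1r dotvZr mulN1r. Qed.
Lemma dotvNl u x : dotv (- u) x = - dotv u x.
Proof. by rewrite -scaleN1r dotvZl mulN1r. Qed.
Lemma dotvBr u x y : dotv u (x - y) = dotv u x - dotv u y.
Proof. by rewrite dotvDr dotvNr. Qed.
Lemma dotv0l x : dotv 0 x = 0.
Proof. by rewrite /dotv big1 // => i _; rewrite mxE mul0r. Qed.
Lemma dotv0r x : dotv x 0 = 0.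
Proof. by rewrite /dotv big1 // => i _; rewrite mxE mulr0. Qed.

Lemma dotv_bound u x : `|dotv u x| <= n%:R * (`|u| * `|x|).
Proof.
rewrite /dotv (le_trans (ler_norm_sum _ _ _)) //.
have -> : n%:R * (`|u| * `|x|) = \sum_(i < n) (`|u| * `|x|).
  by rewrite sumr_const card_ord mulr_natl.
apply: ler_sum => i _; rewrite normrM.
by apply: ler_pM => //; apply: coord_le_norm.
Qed.

Lemma dotv_self_ge0 x : 0 <= dotv x x.
Proof. by apply: sumr_ge0 => i _; rewrite -expr2 sqr_ge0. Qed.

Lemma dotv_self_gt0 x : x != 0 -> 0 < dotv x x.
Proof.
move=> x0; rewrite lt0r dotv_self_ge0 andbT; apply/negP => /eqP.
move/eqP; rewrite psumr_eq0; last by move=> i _; rewrite -expr2 sqr_ge0.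
move=> /allP H; move/negP: x0; apply; apply/eqP/rowP => i.
have := H i (mem_index_enum _); rewrite -expr2 sqrf_eq0 => /eqP ->.
by rewrite mxE.
Qed.

Lemma enorm_le x : enorm x <= n%:R * `|x|.
Proof.
rewrite /enorm (le_trans (y := Num.sqrt ((n%:R * `|x|) ^+ 2))) //; last first.
  by rewrite sqrtr_sqr ger0_norm // mulr_ge0.
rewrite ler_sqrt ?exprn_ge0 ?mulr_ge0 //.
rewrite /dotv exprMn.
have -> : n%:R ^+ 2 * `|x| ^+ 2 = \sum_(i < n) (n%:R * `|x| ^+ 2) :> R.
  by rewrite sumr_const card_ord; ring.
apply: ler_sum => i _.
rewrite -expr2 -real_normK ?num_real //.
have h1 : `|x ord0 i| ^+ 2 <= `|x| ^+ 2 by rewrite lerXn2r ?nnegrE // coord_le_norm.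
have hn : (0 < n)%N := leq_ltn_trans (leq0n i) (ltn_ord i).
by apply: (le_trans h1); rewrite ler_peMl ?sqr_ge0 // ler1n.
Qed.


Lemma edom_fin (f : vec -> \bar R) x : proper_fun f -> edom f x ->
  f x = (fine (f x))%:E.
Proof. by move=> [hp _] hx; rewrite fineK // fin_numE hp /= -ltey. Qed.

Lemma fshift_fin (f : vec -> \bar R) u x : proper_fun f -> edom f x ->
  f_shift f u x = (fine (f x) - dotv u x)%:E.
Proof. by move=> hp hx; rewrite /f_shift (edom_fin _ _ hp hx). Qed.

Lemma recession (X : set vec) x0 d t : closed X -> convexE X -> X x0 ->
  asymptotic_cone X d -> 0 <= t -> X (x0 + t *: d).
Proof.
move=> cX cvX Xx0 [ts [xs [hts [hX hcv]]]] t0.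
have hts' : \forall k \near \oo, Num.max t 1 <= ts k by move/cvgryPge: hts; apply.
have hpos : \forall k \near \oo, 0 < ts k.
  by apply: filterS hts' => k; apply: lt_le_trans; rewrite lt_max ltr01 orbT.
have hinv : (fun k => (ts k)^-1) @ \oo --> 0.
  by apply/(gtr0_cvgV0 hpos).
pose u k := (t / ts k) *: xs k + (1 - t / ts k) *: x0.
have hcl := @closed_cvg nat _ \oo _ u X cX.
apply: hcl.
  near=> k; apply: cvX => //.
  have h1 : 0 < ts k by near: k.
  have h2 : Num.max t 1 <= ts k by near: k.
  rewrite divr_ge0 ?(ltW h1) //= ler_pdivrMr // mul1r.
  by apply: le_trans h2; rewrite le_max lexx.
have -> : u = (fun k => t *: ((ts k)^-1 *: xs k) + (1 - t * (ts k)^-1) *: x0).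
  by apply/funext => k; rewrite /u scalerA.
rewrite addrC; apply: cvgD.
  by apply: (cvgZ (s := fun=> t)) => //; apply: cvg_cst.
have hc : (fun k => (1 - t * (ts k)^-1) *: x0) @ \oo --> (1 - t * 0) *: x0.
  apply: (cvgZ (f := fun=> x0)); last by apply: cvg_cst.
  apply: cvgB; first by apply: cvg_cst.
  by apply: (cvgM (f := fun=> t)) => //; apply: cvg_cst.
by rewrite mulr0 subr0 scale1r in hc.
Unshelve. all: by end_near.
Qed.


Lemma compact_dir (K : set vec) (I : set R) (D : R -> set vec) :
  compact K -> (exists i, I i) -> (forall i j, I i -> I j -> I (Num.min i j)) ->
  (forall i j, I i -> I j -> i <= j -> D i `<=` D j) ->
  (forall i, I i -> D i !=set0) -> (forall i, I i -> D i `<=` K) ->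
  exists2 x, K x & forall i B, I i -> nbhs x B -> D i `&` B !=set0.
Proof.
move=> cK [i0 Ii0] Imin Dmono Dne DK.
pose F := filter_from I D.
have FF : Filter F.
  apply: filter_from_filter; first by exists i0.
  move=> i j Ii Ij; exists (Num.min i j); first exact: Imin.
  move=> x Dx; split.
    by apply: (Dmono _ _ (Imin _ _ Ii Ij) Ii _ _ Dx); rewrite ge_min lexx.
  by apply: (Dmono _ _ (Imin _ _ Ii Ij) Ij _ _ Dx); rewrite ge_min lexx orbT.
have PF : ProperFilter F by apply: filter_from_proper.
have [x [Kx clx]] := cK F PF (ex_intro2 _ _ i0 Ii0 (DK i0 Ii0)).
exists x => // i B Ii nB.
by apply: clx => //; exists i.
Qed.

Lemma dotv_near d x c : c < dotv d x -> \forall y \near x, c < dotv d y.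
Proof.
move=> hc; apply/nbhs_normP.
pose e := (dotv d x - c) / (n%:R * `|d| + 1).
have hN : 0 < n%:R * `|d| + 1 by rewrite ltr_wpDl ?mulr_ge0.
have he : 0 < e by rewrite divr_gt0 // subr_gt0.
exists e => //= y /= hy.
have hb := dotv_bound d (x - y).
rewrite dotvBr in hb.
have h1 : n%:R * (`|d| * `|x - y|) <= n%:R * `|d| * e.
  by rewrite mulrA ler_wpM2l ?mulr_ge0 // ltW.
have h2 : n%:R * `|d| * e < (n%:R * `|d| + 1) * e by rewrite ltr_pM2r // ltrDl.
have h3 : (n%:R * `|d| + 1) * e = dotv d x - c.
  by rewrite /e mulrC divfK // gt_eqF.
have := ler_normlW hb; lra.
Qed.

Lemma open_half d c : open [set y : vec | c < dotv d y].
Proof. by rewrite openE => x hx; apply: dotv_near. Qed.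

Lemma Kq_le (f : vec -> \bar R) d x t : proper_fun f -> Kq f d -> edom f x -> 0 < t ->
  (f (x + t *: d)%R <= f x)%E.
Proof.
move=> hp hk hx ht.
have H0 : ((f (x + t *: d)%R - f x) * (t^-1)%:E <= fq_inf f d)%E.
  by apply: ereal_sup_ubound; exists x, t.
have H := le_trans H0 hk.
move: H; rewrite (edom_fin _ _ hp hx).
case: (f (x + t *: d)%R) => [r||] //=.
  rewrite -EFinD -EFinM !lee_fin => H.
  have : r - fine (f x) <= 0.
    by move: H; rewrite ler_pdivrMr // mul0r.
  lra.
  by rewrite addye // gt0_mulye ?lte_fin ?invr_gt0.
by move=> _; rewrite leNye.
Qed.


Lemma nbhs0_small (U : set vec) d : nbhs (0 : vec) U ->
  exists2 eps : R, 0 < eps & forall s, `|s| <= eps -> U (s *: d).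
Proof.
move=> /nbhs_normP [e /= he hU].
have hd : 0 < `|d| + 1 by rewrite ltr_wpDl.
exists (e / (`|d| + 1)); first by rewrite divr_gt0.
move=> s hs; apply: hU => /=; rewrite sub0r normrN normrZ.
have h1 : `|s| * `|d| <= e / (`|d| + 1) * `|d| by rewrite ler_wpM2r.
apply: (le_lt_trans h1).
rewrite mulrAC ltr_pdivrMr // ltr_pM2l //; lra.
Qed.

Lemma forward (f : vec -> \bar R) (X : set vec) :
  proper_fun f -> closed X -> convexE X -> X `<=` edom f ->
  lsc_map (Sol f X) 0 ->
  (exists x0, Sol f X 0 = [set x0]) /\ asymptotic_cone X `&` Kq f = [set 0].
Proof.
move=> hp cX cvX Xdom [[x0 Sx0] hl].
have Xx0 := (proj1 Sx0).
split.
  exists x0; apply/seteqP; split => b; last by move=> ->.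
  move=> Sb; apply: contrapT => hne.
  pose d := x0 - b.
  have dne : d != 0.
    by apply/eqP => /eqP; rewrite subr_eq0 => /eqP h; apply: hne; rewrite h.
  have hD := dotv_self_gt0 _ dne.
  have hV : dotv d b < dotv d x0 by rewrite -subr_gt0 -dotvBr.
  have [U hU hUV] := hl _ (open_half d (dotv d b)) (ex_intro _ x0 (conj Sx0 hV)).
  have [eps he hUe] := nbhs0_small _ d hU.
  have hu : U ((- eps) *: d) by apply: hUe; rewrite normrN ger0_norm // ltW.
  have [x [[Xx Sx] /= Vx]] := hUV _ hu.
  have h1 := Sx b (proj1 Sb).
  have h2 := (proj2 Sb) x Xx.
  move: h1 h2.
  rewrite (fshift_fin _ _ _ hp (Xdom _ Xx)) (fshift_fin _ _ _ hp (Xdom _ (proj1 Sb))).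
  rewrite (fshift_fin _ _ _ hp (Xdom _ Xx)) (fshift_fin _ _ _ hp (Xdom _ (proj1 Sb))).
  rewrite !lee_fin !dotvZl !dotv0l.
  nra.
apply/seteqP; split => d.
  move=> [hd hk]; apply: contrapT => hne.
  have dne : d != 0 by apply/eqP.
  have hD := dotv_self_gt0 _ dne.
  have [U hU hUV] := hl setT openT (ex_intro _ x0 (conj Sx0 I)).
  have [eps he hUe] := nbhs0_small _ d hU.
  have hu : U (eps *: d) by apply: hUe; rewrite ger0_norm // ltW.
  have [xs [[Xxs Sxs] _]] := hUV _ hu.
  pose A := fine (f x0) - eps * dotv d x0.
  pose r := fine (f xs) - eps * dotv d xs.
  pose t := (`|A - r| + 1) / (eps * dotv d d).
  have ht : 0 < t by rewrite divr_gt0 ?mulr_gt0 // ltr_wpDl.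
  have Xy := recession _ _ _ _ cX cvX Xx0 hd (ltW ht).
  have hle := Kq_le _ _ _ _ hp hk (Xdom _ Xx0) ht.
  have h1 := Sxs _ Xy.
  move: h1 hle.
  rewrite (fshift_fin _ _ _ hp (Xdom _ Xxs)) (fshift_fin _ _ _ hp (Xdom _ Xy)).
  rewrite (edom_fin _ _ hp (Xdom _ Xy)) (edom_fin _ _ hp (Xdom _ Xx0)).
  rewrite !lee_fin !dotvZl dotvDr dotvZr.
  have ht' : eps * (t * dotv d d) = `|A - r| + 1.
    rewrite /t; field.
    by rewrite !gt_eqF.
  have := ler_norm (A - r).
  rewrite /A /r in ht' *.
  nra.
move=> ->; split.
  exists (fun k => k.+1%:R), (fun=> x0); split; [|split] => //.
    apply/cvgryPge => M; apply: filterS (nbhs_infty_ger M) => k hk.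
    by rewrite (le_trans hk) // ler_nat.
  have hpos : \forall k \near \oo, 0 < (k.+1%:R : R) by apply: nearW => k.
  have hinv : (fun k => (k.+1%:R : R)^-1) @ \oo --> 0.
    apply/(gtr0_cvgV0 hpos); apply/cvgryPge => M.
    by apply: filterS (nbhs_infty_ger M) => k hk; rewrite (le_trans hk) // ler_nat.
  have := cvgZ hinv (cvg_cst x0); rewrite scale0r; exact.
rewrite /Kq /fq_inf; apply: ge_ereal_sup => r [x [t [hx [ht ->]]]].
by rewrite scaler0 addr0 (edom_fin _ _ hp hx) subee // mul0e.
Qed.


Lemma inv_small (e : R) : 0 < e -> \forall m \near \oo, (m.+1%:R : R)^-1 < e.
Proof.
move=> he; apply: filterS (nbhs_infty_ger e^-1) => m hm.
have hm1 : (0 : R) < m.+1%:R by rewrite ltr0n.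
rewrite -div1r ltr_pdivrMr //.
have : e * e^-1 <= e * m%:R by rewrite ler_pM2l.
rewrite mulfV ?gt_eqF // -addn1 natrD.
lra.
Qed.

Lemma dotv_cvg {T} {F : set_system T} {FF : Filter F} d {p : T -> vec} {q} :
  p @ F --> q -> (fun m => dotv d (p m)) @ F --> dotv d q.
Proof.
move=> hp; apply/cvgrPdist_lt => e he.
have hN : 0 < n%:R * `|d| + 1 by rewrite ltr_wpDl ?mulr_ge0.
move/cvgrPdist_lt: hp => /(_ (e / (n%:R * `|d| + 1)) (divr_gt0 he hN)).
apply: filterS => m hm.
rewrite -dotvBr (le_lt_trans (dotv_bound _ _)) //.
have h1 : n%:R * (`|d| * `|q - p m|) <= n%:R * `|d| * (e / (n%:R * `|d| + 1)).
  by rewrite mulrA ler_wpM2l ?mulr_ge0 // ltW.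
have h2 : n%:R * `|d| * (e / (n%:R * `|d| + 1)) <
          (n%:R * `|d| + 1) * (e / (n%:R * `|d| + 1)).
  by rewrite ltr_pM2r ?divr_gt0 // ltrDl.
have h3 : (n%:R * `|d| + 1) * (e / (n%:R * `|d| + 1)) = e.
  by rewrite mulrC divfK // gt_eqF.
lra.
Qed.

Lemma asym_Kq (f : vec -> \bar R) (X : set vec) (alpha : R) x0 (ys us : nat -> vec) d :
  proper_fun f -> lower_semicontinuous f -> 0 < alpha ->
  robustly_quasiconvex alpha f -> X `<=` edom f -> X x0 ->
  (forall m, X (ys m)) -> (forall m, m%:R < `|ys m|) ->
  (fun m => `|ys m|^-1 *: ys m) @ \oo --> d ->
  (forall m, `|us m| < m.+1%:R^-1) ->
  (forall m, (f_shift f (us m) (ys m) <= f_shift f (us m) x0)%E) ->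
  d != 0 -> Kq f d.
Proof.
move=> hp hlsc ha hrq Xdom Xx0 Xy Hty Hz Hu Hle dne.
have key : forall x t, edom f x -> 0 < t -> (f (x + t *: d)%R <= f x)%E.
  move=> x t hx ht; rewrite leNgt; apply/negP => hlt.
  pose fx := fine (f x).
  have [a [ha1 ha2]] : exists a : R, fx < a /\ (a%:E < f (x + t *: d)%R)%E.
    move: hlt; rewrite (edom_fin _ _ hp hx) -/fx.
    case: (f (x + t *: d)%R) => [r||] //= hr.
      rewrite lte_fin in hr.
      by exists ((fx + r) / 2); split; rewrite ?lte_fin; lra.
    by exists (fx + 1); split; [lra| exact: ltry].
  have [V hV hVa] := hlsc _ _ ha2.
  pose D := dotv d d.
  have hD : 0 < D := dotv_self_gt0 _ dne.
  have hNd : 0 <= `|d| by [].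
  have hN1 : 0 < n%:R * `|d| + 1 by rewrite ltr_wpDl ?mulr_ge0.
  have hN2 : 0 < t * D + 1 by rewrite ltr_wpDl ?mulr_ge0 // ltW.
  pose c1 := alpha / 2 / (n%:R * `|d| + 1).
  pose c2 := (a - fx) / 2 / (t * D + 1).
  pose beta := Num.min c1 c2.
  have hc1 : 0 < c1 by rewrite /c1 !divr_gt0.
  have hc2 : 0 < c2 by rewrite /c2 !divr_gt0 // subr_gt0.
  have hb : 0 < beta by rewrite lt_min hc1 hc2.
  have hb1 : beta * (n%:R * `|d| + 1) <= alpha / 2.
    by rewrite -ler_pdivlMr // ge_min lexx.
  have hb2 : beta * (t * D + 1) <= (a - fx) / 2.
    by rewrite -ler_pdivlMr // ge_min lexx orbT.
  pose w := (- beta) *: d.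
  have hw : enorm w < alpha.
    apply: le_lt_trans (enorm_le w) _.
    rewrite normrZ normrN gtr0_norm //.
    nra.
  have qc := hrq w hw.
  pose ts := fun m => `|ys m|.
  pose zs := fun m => (ts m)^-1 *: ys m.
  pose p := fun m => (t / ts m) *: ys m + (1 - t / ts m) *: x.
  have hts : ts @ \oo --> +oo.
    apply/cvgryPge => M; apply: filterS (nbhs_infty_ger M) => m hm.
    exact: (le_trans hm (ltW (Hty m))).
  have hts' : \forall k \near \oo, Num.max t 1 <= ts k by move/cvgryPge: hts; apply.
  have hpos : \forall k \near \oo, 0 < ts k.
    by apply: filterS hts' => k; apply: lt_le_trans; rewrite lt_max ltr01 orbT.
  have hinv : (fun k => (ts k)^-1) @ \oo --> 0 by apply/(gtr0_cvgV0 hpos).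
  have hpc : p @ \oo --> x + t *: d.
    have -> : p = (fun k => t *: zs k + (1 - t * (ts k)^-1) *: x).
      by apply/funext => k; rewrite /p /zs scalerA.
    rewrite addrC; apply: cvgD.
      by apply: (cvgZ (s := fun=> t)) => //; apply: cvg_cst.
    have hc : (fun k => (1 - t * (ts k)^-1) *: x) @ \oo --> (1 - t * 0) *: x.
      apply: (cvgZ (f := fun=> x)); last by apply: cvg_cst.
      apply: cvgB; first by apply: cvg_cst.
      by apply: (cvgM (f := fun=> t)) => //; apply: cvg_cst.
    by rewrite mulr0 subr0 scale1r in hc.
  have hdz := dotv_cvg d Hz; have {}hdz := hdz eventually_filter.
  have hdp := dotv_cvg d hpc; have {}hdp := hdp eventually_filter.
  pose c := beta * D / 4 / (n%:R + 1).
  have hc : 0 < c by rewrite /c !divr_gt0 ?mulr_gt0 // ltr_wpDl.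
  pose K0 := `|fine (f x0) + n%:R * `|x0| - (fx + dotv w x)| + 1.
  have hbD : 0 < beta * D / 4 by rewrite divr_gt0 ?mulr_gt0.
  near \oo => m.
  have hm0 : Num.max t 1 <= ts m by near: m.
  have hmV : V (p m) by near: m; exact: (hpc _ hV).
  have hmp : dotv d (p m) < dotv d x + t * D + 1.
    near: m; apply: (cvgr_lt _ hdp); rewrite /= dotvDr dotvZr -/D; lra.
  have hmz : D / 2 < dotv d (zs m).
    by near: m; apply: (cvgr_gt _ hdz); rewrite -/D; lra.
  have hmu : `|us m| < c.
    apply: lt_trans (Hu m) _; near: m; exact: inv_small.
  have hmT : K0 / (beta * D / 4) <= ts m.
    by near: m; move/cvgryPge: hts; apply.
  have tm0 : 0 < ts m by apply: lt_le_trans hm0; rewrite lt_max ltr01 orbT.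
  have tmt : t <= ts m by apply: le_trans hm0; rewrite le_max lexx.
  have yne : ys m = ts m *: zs m by rewrite /zs scalerA divff ?scale1r // gt_eqF.
  have hz1 : `|zs m| = 1.
    by rewrite /zs normrZ ger0_norm ?invr_ge0 ?ltW // mulVf // gt_eqF.
  have hle := Hle m.
  rewrite (fshift_fin _ _ _ hp (Xdom _ (Xy m))) (fshift_fin _ _ _ hp (Xdom _ Xx0)) in hle.
  rewrite lee_fin yne dotvZr in hle.
  have bu1 := dotv_bound (us m) (zs m).
  rewrite hz1 mulr1 in bu1.
  have bu2 := dotv_bound (us m) x0.
  have hu1 : `|us m| <= 1.
    apply: ltW; apply: lt_le_trans (Hu m) _.
    by rewrite invf_le1 ?ltr0n // ler1n.
  have F1 : ts m * dotv (us m) (zs m) <= ts m * (n%:R * c).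
    apply: ler_wpM2l; first exact: ltW.
    have := ler_normlW bu1.
    have : n%:R * `|us m| <= n%:R * c by rewrite ler_wpM2l // ltW.
    lra.
  have F2 : n%:R * c <= beta * D / 4.
    have hc' : c * (n%:R + 1) = beta * D / 4.
      by rewrite /c divfK // gt_eqF // ltr_wpDl.
    lra.
  have F3 : ts m * (beta * (D / 2)) < ts m * (beta * dotv d (zs m)).
    by rewrite ltr_pM2l // ltr_pM2l.
  have F4 : n%:R * (`|us m| * `|x0|) <= n%:R * `|x0|.
    by apply: ler_wpM2l => //; apply: ler_piMl.
  have F5 : K0 <= ts m * (beta * D / 4).
    by rewrite ler_pdivrMr // in hmT.
  have F6 := ler_norm (fine (f x0) + n%:R * `|x0| - (fx + dotv w x)).
  have Fw : forall y, dotv w y = - beta * dotv d y by move=> y; rewrite /w dotvZl.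
  have hgy : (f (ys m) + (dotv w (ys m))%:E < f x + (dotv w x)%:E)%E.
    rewrite (edom_fin _ _ hp (Xdom _ (Xy m))) (edom_fin _ _ hp hx) -!EFinD lte_fin.
    rewrite -/fx Fw yne dotvZr.
    rewrite /K0 Fw in F5 F6.
    have F2' : ts m * (n%:R * c) <= ts m * (beta * D / 4) by rewrite ler_wpM2l // ltW.
    move: bu2; rewrite ler_norml => /andP[bu2 _].
    rewrite !Fw in F5 F6 *.
    lra.
  have hl : 0 <= t / ts m <= 1.
    apply/andP; split; first by rewrite divr_ge0 // ltW.
    by rewrite ler_pdivrMr // mul1r.
  have edg : forall y, edom f y -> edom (fun y => (f y + (dotv w y)%:E)%E) y.
    by move=> y hy; rewrite /edom /=; apply: lte_add_pinfty => //; exact: ltry.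
  have := qc _ _ _ (edg _ (Xdom _ (Xy m))) (edg _ hx) hl.
  rewrite -/(p m) max_r; last exact: ltW.
  have hfa := hVa _ hmV.
  rewrite (edom_fin _ _ hp hx) -/fx.
  move: hfa; case: (f (p m)) => [r||] //=.
  rewrite !lte_fin -!EFinD lee_fin !Fw => h1 h2.
  nra.
apply: ge_ereal_sup => r [x [t [hx [ht ->]]]].
have := key x t hx ht.
rewrite (edom_fin _ _ hp hx).
case: (f (x + t *: d)%R) => [r'||] //= hle.
  rewrite -EFinD -EFinM lee_fin; apply: mulr_le0_ge0.
    by rewrite lee_fin in hle; lra.
  by rewrite invr_ge0 ltW.
by rewrite addNye gt0_mulNye // lte_fin invr_gt0.
Unshelve. all: by end_near.
Qed.


Lemma ereal_between (x y : \bar R) : (x < y)%E -> x \is a fin_num ->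
  exists a : R, (x < a%:E)%E /\ (a%:E < y)%E.
Proof.
move=> hxy hx; move: hxy; rewrite -(fineK hx).
case: y => [r||] //=.
  rewrite lte_fin => h; exists ((fine x + r) / 2); rewrite !lte_fin; split; lra.
by move=> _; exists (fine x + 1); rewrite lte_fin ltry; split => //; lra.
Qed.

Lemma fshift_lsc (f : vec -> \bar R) u : lower_semicontinuous f ->
  (forall x, f x != -oo%E) -> lower_semicontinuous (f_shift f u).
Proof.
move=> hl hN x a ha.
pose c := dotv u x.
have [b [hb1 hb2]] : exists b : R, a + c < b /\ (b%:E < f x)%E.
  move: ha (hN x); rewrite /f_shift -/c.
  case: (f x) => [r||] //=.
    rewrite -EFinD lte_fin => h _; exists ((a + c + r) / 2).
    by split; rewrite ?lte_fin; lra.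
  by move=> _ _; exists (a + c + 1); split; [lra | exact: ltry].
have [V hV hVb] := hl x b hb2.
have hn := dotv_near (- u) x (- c - (b - (a + c))).
have hn' : - c - (b - (a + c)) < dotv (- u) x by rewrite dotvNl -/c; lra.
exists (V `&` [set z | - c - (b - (a + c)) < dotv (- u) z]).
  by apply: filterI => //; apply: hn.
move=> z [Vz /= hz]; rewrite dotvNl in hz.
move: (hVb z Vz); rewrite /f_shift.
case: (f z) => [r||] //=.
  rewrite -EFinD !lte_fin; lra.
by move=> _; rewrite addye // ltry.
Qed.

Lemma closed_nball (M : R) : closed [set y : vec | `|y| <= M].
Proof.
have -> : [set y : vec | `|y| <= M] = (fun y : vec => `|y|) @^-1` [set r : R | r <= M] by [].
apply: preimage_closed; first by move=> x _; exact: norm_continuous.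
exact: closed_le.
Qed.

Lemma closed_sphere : closed [set y : vec | `|y| = 1].
Proof.
have -> : [set y : vec | `|y| = 1] = (fun y : vec => `|y|) @^-1` [set r : R | r = 1] by [].
apply: preimage_closed; first by move=> x _; exact: norm_continuous.
exact: closed_eq.
Qed.

Lemma bounded_by (A : set vec) M : (forall x, A x -> `|x| <= M) -> bounded_set A.
Proof.
move=> H; exists M; split; first exact: num_real.
by move=> N hN x Ax /=; exact: le_trans (H x Ax) (ltW hN).
Qed.


Lemma unif_bound (f : vec -> \bar R) (X : set vec) (alpha : R) x0 :
  proper_fun f -> lower_semicontinuous f -> 0 < alpha ->
  robustly_quasiconvex alpha f -> X `<=` edom f -> X x0 ->
  asymptotic_cone X `&` Kq f = [set 0] ->
  exists2 delta : R, 0 < delta & exists M : R, forall u y, `|u| < delta -> X y ->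
    (f_shift f u y <= f_shift f u x0)%E -> `|y| <= M.
Proof.
move=> hp hl ha hrq Xdom Xx0 hcone.
apply: contrapT => hneg.
have hex : forall e : R, 0 < e -> exists u y, `|u| < e /\ X y /\
    (f_shift f u y <= f_shift f u x0)%E /\ e^-1 < `|y|.
  move=> e he; apply: contrapT => h; apply: hneg; exists e => //.
  exists e^-1 => u y hu Xy hle.
  rewrite leNgt; apply/negP => hy; apply: h; exists u, y; split => //.
pose D := fun e : R => [set z : vec | exists u y, `|u| < e /\ X y /\
    (f_shift f u y <= f_shift f u x0)%E /\ e^-1 < `|y| /\ z = `|y|^-1 *: y].
have cK : compact [set z : vec | `|z| = 1].
  apply: bounded_closed_compact; last exact: closed_sphere.
  by apply: (bounded_by _ 1) => x /= ->.
have Imin : forall i j : R, 0 < i -> 0 < j -> 0 < Num.min i j.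
  by move=> i j hi hj; rewrite lt_min hi hj.
have Dmono : forall i j : R, 0 < i -> 0 < j -> i <= j -> D i `<=` D j.
  move=> i j hi hj hij z [u [y [hu [Xy [hle [hy ->]]]]]].
  exists u, y; split; first exact: lt_le_trans hu hij.
  do 2! split => //; split => //.
  by apply: le_lt_trans hy; rewrite lef_pV2 // ?posrE.
have Dne : forall i : R, 0 < i -> D i !=set0.
  move=> i hi; have [u [y [hu [Xy [hle hy]]]]] := hex i hi.
  by exists (`|y|^-1 *: y); exists u, y.
have DK : forall i : R, 0 < i -> D i `<=` [set z : vec | `|z| = 1].
  move=> i hi z [u [y [hu [Xy [hle [hy ->]]]]]].
  have hy0 : 0 < `|y| by apply: lt_trans hy; rewrite invr_gt0.
  by rewrite /= normrZ ger0_norm ?invr_ge0 ?ltW // mulVf // gt_eqF.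
have [d Kd hd] := @compact_dir [set z : vec | `|z| = 1] [set e : R | 0 < e] D
  cK (ex_intro _ 1 ltr01) Imin Dmono Dne DK.
have hch : forall m : nat, exists uy : vec * vec, `|uy.1| < m.+1%:R^-1 /\ X uy.2 /\
    (f_shift f uy.1 uy.2 <= f_shift f uy.1 x0)%E /\ m.+1%:R < `|uy.2| /\
    `|d - `|uy.2|^-1 *: uy.2| < m.+1%:R^-1.
  move=> m; have hm : 0 < (m.+1%:R : R)^-1 by rewrite invr_gt0 ltr0n.
  have [z [[u [y [hu [Xy [hle [hy ->]]]]]] hb]] := hd _ _ hm (nbhsx_ballx d _ hm).
  exists (u, y); rewrite invrK in hy; split => //; split => //; split => //; split => //.
  by rewrite -ball_normE in hb.
have [g hg] := choice hch.
pose us := fun m => (g m).1.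
pose ys := fun m => (g m).2.
have hd1 : `|d| = 1 := Kd.
have dne : d != 0 by apply/eqP => h; rewrite h normr0 in hd1; move/eqP: hd1; rewrite eq_sym oner_eq0.
have hz : (fun m => `|ys m|^-1 *: ys m) @ \oo --> d.
  apply/cvgrPdist_lt => e he; apply: filterS (inv_small _ he) => m hm.
  have [_ [_ [_ [_ h]]]] := hg m.
  exact: lt_trans h hm.
have Hty : forall m, m%:R < `|ys m|.
  move=> m; have [_ [_ [_ [h _]]]] := hg m.
  by apply: lt_trans h; rewrite ltr_nat.
have hK := asym_Kq f X alpha x0 ys us d hp hl ha hrq Xdom Xx0
  (fun m => proj1 (proj2 (hg m))) Hty hz (fun m => proj1 (hg m))
  (fun m => proj1 (proj2 (proj2 (hg m)))) dne.
have hC : asymptotic_cone X d.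
  exists (fun m => `|ys m|), ys; split; last split => //.
    apply/cvgryPge => N; apply: filterS (nbhs_infty_ger N) => m hm.
    exact: le_trans hm (ltW (Hty m)).
  by move=> m; exact: (proj1 (proj2 (hg m))).
have : (asymptotic_cone X `&` Kq f) d by split.
rewrite hcone => /= hd0.
by move/eqP: dne; apply.
Qed.


Lemma fshift0 (f : vec -> \bar R) x : f_shift f 0 x = f x.
Proof. by rewrite /f_shift dotv0l sube0. Qed.

Lemma usc_back (f : vec -> \bar R) (X : set vec) x0 (delta M : R) :
  proper_fun f -> lower_semicontinuous f -> closed X -> X `<=` edom f ->
  Sol f X 0 = [set x0] -> 0 < delta ->
  (forall u y, `|u| < delta -> X y ->
    (f_shift f u y <= f_shift f u x0)%E -> `|y| <= M) ->
  usc_map (Sol f X) 0.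
Proof.
move=> hp hl cX Xdom hS hdel hM V oV hSV.
have Sx0 : Sol f X 0 x0 by rewrite hS.
have Xx0 := proj1 Sx0.
have Vx0 : V x0 by apply: hSV.
apply: contrapT => hneg.
have hex : forall e : R, 0 < e -> exists u x, `|u| < e /\ Sol f X u x /\ ~ V x.
  move=> e he; apply: contrapT => h; apply: hneg.
  exists (ball (0 : vec) e); first exact: nbhsx_ballx.
  move=> u hu x Sx; apply: contrapT => nVx; apply: h; exists u, x; split => //.
  by rewrite -ball_normE /= sub0r normrN in hu.
pose D := fun e : R => [set x : vec | exists u, `|u| < Num.min e delta /\ Sol f X u x /\ ~ V x].
pose K := X `&` ([set y : vec | `|y| <= M] `&` ~` V).
have cK : compact K.
  apply: bounded_closed_compact.
    by apply: (bounded_by _ M) => x [_ []].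
  apply: closedI => //; apply: closedI; first exact: closed_nball.
  exact: open_closedC.
have Imin : forall i j : R, 0 < i -> 0 < j -> 0 < Num.min i j.
  by move=> i j hi hj; rewrite lt_min hi hj.
have Dmono : forall i j : R, 0 < i -> 0 < j -> i <= j -> D i `<=` D j.
  move=> i j hi hj hij z [u [hu hz]]; exists u; split => //.
  apply: lt_le_trans hu _; rewrite le_min !ge_min lexx orbT andbT.
  by rewrite hij.
have Dne : forall i : R, 0 < i -> D i !=set0.
  move=> i hi; have [u [x [hu [Sx nVx]]]] := hex _ (Imin _ _ hi hdel).
  by exists x; exists u.
have DK : forall i : R, 0 < i -> D i `<=` K.
  move=> i hi z [u [hu [[Xz Sz] nVz]]]; split => //; split => //.
  apply: (hM u) => //; last exact: Sz.
  by apply: lt_le_trans hu _; rewrite ge_min lexx orbT.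
have [xb [Xxb [Mxb nVxb]] hcl] := @compact_dir K [set e : R | 0 < e] D
  cK (ex_intro _ 1 ltr01) Imin Dmono Dne DK.
have Sxb : Sol f X 0 xb.
  split => // y Xy; rewrite !fshift0 leNgt; apply/negP => hlt.
  have fyfin : f y \is a fin_num by rewrite (edom_fin _ _ hp (Xdom _ Xy)).
  have [a [ha1 ha2]] := ereal_between _ _ hlt fyfin.
  have [B hB hBa] := hl xb a ha2.
  pose fy := fine (f y).
  have ha1' : fy < a by move: ha1; rewrite (edom_fin _ _ hp (Xdom _ Xy)) lte_fin.
  pose N := n%:R * (M + `|y|) + 1.
  have hM0 : 0 <= M by apply: le_trans Mxb.
  have hN : 0 < N by rewrite ltr_wpDl // mulr_ge0 // addr_ge0.
  pose e := (a - fy) / N.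
  have he : 0 < e by rewrite divr_gt0 // subr_gt0.
  have [x [[u [hu [[Xx Sx] nVx]]] Bx]] := hcl e B he hB.
  have hue : `|u| < e by apply: lt_le_trans hu _; rewrite ge_min lexx.
  have hud : `|u| < delta by apply: lt_le_trans hu _; rewrite ge_min lexx orbT.
  have hxM : `|x| <= M by apply: (hM u) => //; exact: Sx.
  have h1 := Sx y Xy.
  rewrite (fshift_fin _ _ _ hp (Xdom _ Xx)) (fshift_fin _ _ _ hp (Xdom _ Xy)) lee_fin in h1.
  have h2 := hBa x Bx.
  rewrite (edom_fin _ _ hp (Xdom _ Xx)) lte_fin in h2.
  have hb := dotv_bound u (x - y).
  rewrite dotvBr in hb.
  have hxy : `|x - y| <= M + `|y| by apply: le_trans (ler_normB _ _) _; rewrite lerD2r.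
  have P1 : `|u| * `|x - y| <= e * (M + `|y|) by apply: ler_pM => //; exact: ltW.
  have P2 : n%:R * (`|u| * `|x - y|) <= n%:R * (e * (M + `|y|)) by apply: ler_wpM2l.
  have P3 : e * N = a - fy by rewrite /e divfK // gt_eqF.
  rewrite /N in P3.
  have := ler_normlW hb.
  rewrite -/fy in h1.
  nra.
have : xb = x0 by rewrite hS in Sxb.
by move=> h; apply: nVxb; rewrite h.
Qed.

Lemma sol_exists (f : vec -> \bar R) (X : set vec) x0 u (M : R) :
  proper_fun f -> lower_semicontinuous f -> closed X -> X `<=` edom f -> X x0 ->
  (forall y, X y -> (f_shift f u y <= f_shift f u x0)%E -> `|y| <= M) ->
  exists x, Sol f X u x.
Proof.
move=> hp hl cX Xdom Xx0 hM.
pose g := f_shift f u.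
have hg : lower_semicontinuous g := fshift_lsc f u hl (proj1 hp).
pose K := X `&` [set y : vec | `|y| <= M].
have cK : compact K.
  apply: bounded_closed_compact.
    by apply: (bounded_by _ M) => x [].
  by apply: closedI => //; exact: closed_nball.
have Kx0 : K x0 by split => //; apply: hM.
pose m := ereal_inf (g @` K).
have hm0 : (m <= g x0)%E by apply: ereal_inf_lbound; exists x0.
have gfin : forall y, X y -> g y = (fine (f y) - dotv u y)%:E.
  by move=> y Xy; rewrite /g (fshift_fin _ _ _ hp (Xdom _ Xy)).
pose D := fun a : R => [set z : vec | K z /\ (g z < a%:E)%E].
have Ine : exists a : R, (m < a%:E)%E.
  exists (fine (f x0) - dotv u x0 + 1); apply: le_lt_trans hm0 _.
  by rewrite gfin // lte_fin ltrDl.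
have Imin : forall i j : R, (m < i%:E)%E -> (m < j%:E)%E -> (m < (Num.min i j)%:E)%E.
  by move=> i j hi hj; rewrite EFin_min lt_min hi hj.
have Dmono : forall i j : R, (m < i%:E)%E -> (m < j%:E)%E -> i <= j -> D i `<=` D j.
  move=> i j hi hj hij z [Kz hz]; split => //.
  by apply: lt_le_trans hz _; rewrite lee_fin.
have Dne : forall i : R, (m < i%:E)%E -> D i !=set0.
  move=> i hi; have [y [z Kz <-] hy] := ereal_inf_lt hi.
  by exists z.
have DK : forall i : R, (m < i%:E)%E -> D i `<=` K by move=> i _ z [].
have [xb Kxb hcl] := @compact_dir K [set a : R | (m < a%:E)%E] D cK Ine Imin Dmono Dne DK.
exists xb; split; first exact: (proj1 Kxb).
move=> y Xy; rewrite leNgt; apply/negP => hlt.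
have hmy : (m <= g y)%E.
  case: (leP (g y) (g x0)) => h.
    by apply: ereal_inf_lbound; exists y => //; split => //; apply: hM.
  exact: le_trans hm0 (ltW h).
have gyfin : g y \is a fin_num by rewrite gfin.
have [a [ha1 ha2]] := ereal_between _ _ hlt gyfin.
have [B hB hBa] := hg xb a ha2.
have [z [[Kz hz] Bz]] := hcl a B (le_lt_trans hmy ha1) hB.
have := hBa z Bz.
by rewrite ltNge (ltW hz).
Qed.


Lemma backward (f : vec -> \bar R) (X : set vec) (alpha : R) :
  proper_fun f -> lower_semicontinuous f -> closed X -> 0 < alpha ->
  robustly_quasiconvex alpha f -> X `<=` edom f ->
  (exists x0, Sol f X 0 = [set x0]) /\ asymptotic_cone X `&` Kq f = [set 0] ->
  usc_map (Sol f X) 0 /\ lsc_map (Sol f X) 0.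
Proof.
move=> hp hl cX ha hrq Xdom [[x0 hS] hcone].
have Sx0 : Sol f X 0 x0 by rewrite hS.
have Xx0 := proj1 Sx0.
have [delta hdel [M hM]] := unif_bound f X alpha x0 hp hl ha hrq Xdom Xx0 hcone.
have husc := usc_back f X x0 delta M hp hl cX Xdom hS hdel hM.
split => //; split; first by exists x0.
move=> V oV [x [Sx Vx]].
have hx : x = x0 by rewrite hS in Sx.
have hsub : Sol f X 0 `<=` V by rewrite hS => z /= ->; rewrite -hx.
have [U hU hUV] := husc V oV hsub.
exists (U `&` ball (0 : vec) delta).
  by apply: filterI => //; exact: nbhsx_ballx.
move=> u [Uu bu].
have hu : `|u| < delta by rewrite -ball_normE /= sub0r normrN in bu.
have [xs Sxs] := sol_exists f X x0 u M hp hl cX Xdom Xx0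
  (fun y Xy hle => hM u y hu Xy hle).
by exists xs; split => //; apply: (hUV u Uu).
Qed.

End Basic.

Theorem mainTheorem13 (R : realType) (n : nat) (f : 'rV[R]_n -> \bar R)
    (X : set 'rV[R]_n) (alpha : R) :
  proper_fun f ->
  lower_semicontinuous f ->
  closed X ->
  X !=set0 ->
  ~ bounded_setE (edom f `&` X) ->
  convexE X ->
  0 < alpha ->
  robustly_quasiconvex alpha f ->
  X `<=` edom f ->
  (usc_map (Sol f X) 0 /\ lsc_map (Sol f X) 0) <->
  ((exists x0, Sol f X 0 = [set x0]) /\ asymptotic_cone X `&` Kq f = [set 0]).
Proof.
move=> hp hl cX _ _ cvX ha hrq Xdom; split.
  by move=> [_ hlsc]; exact: (forward f X hp cX cvX Xdom hlsc).
exact: (backward f X alpha hp hl cX ha hrq Xdom).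
Qed.
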